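(* Let $P=\{S_1,\ldots,S_n\}$ be a homothetic packing of $n\ge 6$ squares whose radii satisfy the weak generic condition. Suppose that $(n_1,\ldots,n_k)$ is a cycle in the graph $([n],E_x)$ such that, setting $n_0=n_k$ and $n_{k+1}=n_1$, for every $i\in[k]$ neither $x_{n_{i-1}}<x_{n_i}<x_{n_{i+1}}$ nor $x_{n_{i+1}}<x_{n_i}<x_{n_{i-1}}$ holds. Then $k=4$ and the squares $S_{n_1},S_{n_2},S_{n_3},S_{n_4}$ share a corner.
   Context: Let $S=\{(x,y): -1\le x,y\le 1\}$. A homothetic packing of $n$ squares is a set $P=\{S_1,\ldots,S_n\}$ with $S_i=r_iS+p_i$, $r_i>0$ (radii), $p_i=(x_i,y_i)\in\mathbb{R}^2$ (centres), such that distinct squares have disjoint interiors. Its contact graph is $G=([n],E)$ where $\{i,j\}\in E$ iff $i\ne j$ and $S_i\cap S_j\ne\emptyset$; $E_x$ is the set of pairs $\{i,j\}\in E$ with $r_i+r_j=|x_i-x_j|\ge|y_i-y_j|$. The radii satisfy the weak generic condition if the only function $\sigma:[n]\to\{-1,0,1\}$ with at least $4$ zeroes and $\sum_{i=1}^n\sigma_ir_i=0$ is the zero function. Four squares share a corner if they have a common point which is a corner of each of them. *)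

(* Defs.v *)
From mathcomp Require Import all_boot all_order all_algebra.
From mathcomp Require Import reals.
Set Implicit Arguments. Unset Strict Implicit. Unset Printing Implicit Defensive.
Import Order.TTheory GRing.Theory Num.Theory.
Local Open Scope ring_scope.

Section Squares.
Variables (R : realType) (n : nat).
Variables (r x y : 'I_n -> R).

(* S_i = r_i S + p_i, S = [-1,1]^2 : the closed square *)
Definition in_square (i : 'I_n) (q : R * R) : Prop :=
  `|q.1 - x i| <= r i /\ `|q.2 - y i| <= r i.

Definition in_square_int (i : 'I_n) (q : R * R) : Prop :=
  `|q.1 - x i| < r i /\ `|q.2 - y i| < r i.

Definition homothetic_packing : Prop :=
  (forall i, 0 < r i) /\
  (forall i j, i != j -> forall q, ~ (in_square_int i q /\ in_square_int j q)).

Definition contact (i j : 'I_n) : Prop :=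
  i != j /\ exists q, in_square i q /\ in_square j q.

Definition Ex_edge (i j : 'I_n) : Prop :=
  contact i j /\ r i + r j = `|x i - x j| /\ `|y i - y j| <= `|x i - x j|.

Definition weak_generic : Prop :=
  forall sigma : 'I_n -> int,
    (forall i, sigma i \in [:: (-1)%R; 0%R; 1%R]) ->
    (4 <= #|[set i | sigma i == 0%R]|)%N ->
    \sum_(i < n) (sigma i)%:~R * r i = 0 ->
    forall i, sigma i = 0%R.

Definition is_corner (i : 'I_n) (q : R * R) : Prop :=
  (q.1 = x i + r i \/ q.1 = x i - r i) /\ (q.2 = y i + r i \/ q.2 = y i - r i).

End Squares.

Definition Ex_cycle (R : realType) (n : nat) (r x y : 'I_n -> R)
    (k : nat) (c : 'I_k -> 'I_n) : Prop :=
  (3 <= k)%N /\ injective c /\ forall i : 'I_k, Ex_edge r x y (c i) (c (ordS i)).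

(* Main.v *)
Require Import Defs.
From mathcomp Require Import all_boot all_order all_algebra.
From mathcomp Require Import reals.
From mathcomp Require Import lra zify.
Set Implicit Arguments. Unset Strict Implicit. Unset Printing Implicit Defensive.
Import Order.TTheory GRing.Theory Num.Theory.
Local Open Scope ring_scope.

Definition good (R : realType) (k : nat) (lo hi : nat -> R) (t : nat -> bool) : Prop :=
  [/\ (3 <= k)%N,
      (forall m, lo m = lo (m %% k)%N /\ hi m = hi (m %% k)%N /\ t m = t (m %% k)%N),
      (forall m, lo m < hi m),
      (forall m m', (m %% k != m' %% k)%N -> t m = t m' -> hi m <= lo m' \/ hi m' <= lo m) &
      (forall m, (lo m <= hi m.+1 /\ lo m.+1 <= hi m) /\ t m.+1 != t m)].

Lemma exitP (f : nat -> bool) a d : f a -> ~~ f (a + d)%N ->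
  exists m, [/\ (a <= m)%N, (m < a + d)%N, f m & ~~ f m.+1].
Proof.
elim: d => [|d IH] fa nf; first by rewrite addn0 fa in nf.
case fd: (f (a + d)%N).
  exists (a + d)%N; split => //; [lia|lia|by rewrite -addnS].
have [m [h1 h2 h3 h4]] := IH fa (negbT fd).
exists m; split => //; lia.
Qed.

Lemma mod_neq k u v : (u < v)%N -> (v < u + k)%N -> (u %% k != v %% k)%N.
Proof.
move=> h1 h2; apply/negP => /eqP E.
have : (v == u %[mod k]) by rewrite E.
rewrite eqn_mod_dvd; last by lia.
move=> /dvdn_leq; have -> : (0 < v - u)%N by lia.
move=> /(_ isT); lia.
Qed.

Section Good.
End Good.

Lemma good_perk R k lo hi t (G : @good R k lo hi t) m :
  [/\ lo (m + k)%N = lo m, hi (m + k)%N = hi m & t (m + k)%N = t m].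
Proof.
case: G => _ P _ _ _.
have [a [b c]] := P m; have [a' [b' c']] := P (m + k)%N.
by rewrite a' b' c' modnDr -a -b -c.
Qed.

Lemma good_modeq R k lo hi t (G : @good R k lo hi t) m m' :
  (m %% k = m' %% k)%N -> [/\ lo m = lo m', hi m = hi m' & t m = t m'].
Proof.
case: G => _ P _ _ _ E.
have [a [b c]] := P m; have [a' [b' c']] := P m'.
by rewrite a b c E -a' -b' -c'.
Qed.

Lemma good_t2 R k lo hi t (G : @good R k lo hi t) m : t m.+2 = t m.
Proof.
case: G => _ _ _ _ T.
by move: (T m).2 (T m.+1).2; case: (t m); case: (t m.+1); case: (t m.+2).
Qed.

Lemma CL R k lo hi t (G : @good R k lo hi t) w a d :
  (0 < d < k)%N -> hi a <= w -> w < hi (a + d)%N ->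
  (w <= lo (a + d)%N \/ forall m, w <= hi m) ->
  exists u nu v nv, (u %% k != v %% k)%N /\
   [/\ lo u <= w, w < hi u, lo v <= w & w < hi v] /\
   [/\ hi nu <= w, hi nv <= w, lo u <= hi nu & lo v <= hi nv] /\
   t nu != t u /\ t nv != t v.
Proof.
move=> /andP[d0 dk] Ha Hz HW.
have G' := G; case: G' => k3 _ H1 H2 H34.
have q0 : ~~ (hi (a + d)%N <= w) by rewrite -ltNge.
have [m1 [b1 b2 q1 q2]] := @exitP (fun m => hi m <= w) a d Ha q0.
have e1 : (a + d + (k - d) = a + k)%N by lia.
have f2 : ~~ ~~ (hi (a + d + (k - d))%N <= w).
  by rewrite negbK e1; case: (good_perk G a) => _ -> _.
have [m2 [c1 c2 r1 r2]] := @exitP (fun m => ~~ (hi m <= w)) (a + d)%N (k - d)%N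
  q0 f2.
rewrite negbK in r2; rewrite -ltNge in q2 r1.
have [lt|eq] : (m1.+1 < m2)%N \/ m1.+1 = m2 by lia.
  exists m1.+1, m1, m2, m2.+1; split; first by apply: mod_neq => //; lia.
  have l1 := (H34 m1).1.2; have l2 := (H34 m2).1.1.
  split; first by split; lra.
  split; first by split; lra.
  by split; [rewrite eq_sym; exact: (H34 m1).2 | exact: (H34 m2).2].
exfalso; subst m2.
have hd : (m1.+1 = a + d)%N by lia.
have nm : (m1 %% k != m1.+2 %% k)%N by apply: mod_neq; lia.
have := H2 _ _ nm (esym (good_t2 G m1)).
move: (H34 m1) => [[_ l1] _]; move: (H34 m1.+1) => [[l2 _] _].
move: (H1 m1) (H1 m1.+2) => h1 h2.
case: HW => [|HW]; first rewrite -hd => HW.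
  by case => ?; lra.
by move: (HW m1) (HW m1.+2) => ? ?; case => ?; lra.
Qed.

Lemma CL2 R k lo hi t (G : @good R k lo hi t) w a z :
  hi a <= w -> w < hi z ->
  (w <= lo z \/ forall m, w <= hi m) ->
  exists u nu v nv, (u %% k != v %% k)%N /\
   [/\ lo u <= w, w < hi u, lo v <= w & w < hi v] /\
   [/\ hi nu <= w, hi nv <= w, lo u <= hi nu & lo v <= hi nv] /\
   t nu != t u /\ t nv != t v.
Proof.
move=> Ha Hz HW.
have G' := G; case: G' => k3 _ _ _ _.
have k0 : (0 < k)%N by lia.
have [la ha _] := good_modeq G (modn_mod a k).
have [lz hz _] := good_modeq G (modn_mod z k).
have a0k : (a %% k < k)%N by rewrite ltn_pmod.
have z0k : (z %% k < k)%N by rewrite ltn_pmod.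
case: (ltngtP (a %% k) (z %% k)) => c.
- have E : (a %% k + (z %% k - a %% k) = z %% k)%N by lia.
  apply: (@CL _ _ _ _ _ G w (a %% k) (z %% k - a %% k)).
  + apply/andP; split; lia.
  + by rewrite ha.
  + by rewrite E hz.
  + by rewrite E lz.
- have [lk hk _] := good_perk G (z %% k).
  have E : (a %% k + (z %% k + k - a %% k) = z %% k + k)%N by lia.
  apply: (@CL _ _ _ _ _ G w (a %% k) (z %% k + k - a %% k)).
  + apply/andP; split; lia.
  + by rewrite ha.
  + by rewrite E hk hz.
  + by rewrite E lk lz.
- have [_ h _] := good_modeq G c.
  by move: Ha Hz; rewrite h => ? ?; exfalso; lra.
Qed.

Lemma strad_uniq R k lo hi t (G : @good R k lo hi t) w x x' :
  lo x <= w -> w < hi x -> lo x' <= w -> w < hi x' -> t x = t x' ->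
  (x %% k = x' %% k)%N.
Proof.
move=> h1 h2 h3 h4 Ht; case: G => _ _ H1 H2 _.
case E: (x %% k == x' %% k)%N; first exact/eqP.
have := H2 x x' (negbT E) Ht; move: (H1 x) (H1 x') => ? ?; case=> ?; exfalso; lra.
Qed.

Lemma neq_of_hi R k lo hi t (G : @good R k lo hi t) x x' :
  hi x != hi x' -> (x %% k != x' %% k)%N.
Proof.
move=> h; apply/negP => /eqP E; have [_ E' _] := good_modeq G E.
by rewrite E' eqxx in h.
Qed.

Lemma neq_of_lo R k lo hi t (G : @good R k lo hi t) x x' :
  lo x != lo x' -> (x %% k != x' %% k)%N.
Proof.
move=> h; apply/negP => /eqP E; have [E' _ _] := good_modeq G E.
by rewrite E' eqxx in h.
Qed.

Lemma bottom R k lo hi t (G : @good R k lo hi t) g a z :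
  (forall m, g <= hi m) -> hi a = g -> g < hi z ->
  forall tau, (exists m, t m = tau /\ hi m = g) /\ (exists m, t m = tau /\ lo m = g).
Proof.
move=> Hg Ha Hz.
have Ha' : hi a <= g by rewrite Ha.
have [u [nu [v [nv [Nuv [[s1 s2 s3 s4] [[b1 b2 b3 b4] [T1 T2]]]]]]]] :=
  CL2 G Ha' Hz (or_intror Hg).
have G' := G; case: G' => _ _ H1 H2 _.
have tuv : t u != t v.
  apply/negP => /eqP E; have := strad_uniq G s1 s2 s3 s4 E.
  by move/eqP: Nuv.
have [tb1 tb2] : t nv = t u /\ t nu = t v.
  by move: T1 T2 tuv; case: (t nu); case: (t u); case: (t v); case: (t nv).
have hnu : hi nu = g by move: (Hg nu); lra.
have hnv : hi nv = g by move: (Hg nv); lra.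
have lu : lo u = g.
  have nn : (nv %% k != u %% k)%N by apply: neq_of_hi G _ _ _; apply/eqP; lra.
  have := H2 _ _ nn tb1; move: (H1 nv) (H1 u) => ? ?; case=> ?; lra.
have lv : lo v = g.
  have nn : (nu %% k != v %% k)%N by apply: neq_of_hi G _ _ _; apply/eqP; lra.
  have := H2 _ _ nn tb2; move: (H1 nu) (H1 v) => ? ?; case=> ?; lra.
move=> tau; case: (eqVneq tau (t u)) => [->|ne].
  by split; [exists nv | exists u].
have tv : t v = tau by move: ne tuv; case: (t v); case: (t u); case: tau.
by split; [exists nu; rewrite tb2 | exists v].
Qed.

Lemma G1 R k lo hi t (G : @good R k lo hi t) g a z :
  (forall m, g <= hi m) -> hi a = g -> g < hi z ->
  forall z', g < hi z' -> g <= lo z'.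
Proof.
move=> Hg Ha Hz z' Hz'; rewrite leNgt; apply/negP => Hl.
have [_ [m [tm lm]]] := bottom G Hg Ha Hz (t z').
have G' := G; case: G' => _ _ H1 H2 _.
have nn : (m %% k != z' %% k)%N by apply: neq_of_lo G _ _ _; apply/eqP; lra.
have := H2 _ _ nn tm; move: (H1 m) (H1 z') => ? ?; case=> ?; lra.
Qed.

Lemma chain R k lo hi t (G : @good R k lo hi t) g a :
  (forall m, g <= hi m) -> hi a = g ->
  forall s, g < lo s -> exists s', t s' = t s /\ hi s' = lo s.
Proof.
move=> Hg Ha s Hs.
have G' := G; case: G' => _ _ H1 H2 _.
have Ha' : hi a <= lo s by rewrite Ha; lra.
have [u [nu [v [nv [Nuv [[s1 s2 s3 s4] [[b1 b2 b3 b4] [T1 T2]]]]]]]] :=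
  CL2 G Ha' (H1 s) (or_introl (lexx _)).
have tuv : t u != t v.
  apply/negP => /eqP E; have := strad_uniq G s1 s2 s3 s4 E.
  by move/eqP: Nuv.
have [tb1 tb2] : t nv = t u /\ t nu = t v.
  by move: T1 T2 tuv; case: (t nu); case: (t u); case: (t v); case: (t nv).
have ls : lo s <= lo s by [].
case: (eqVneq (t u) (t s)) => [E|ne].
  have [lu _ _] := good_modeq G (strad_uniq G s1 s2 ls (H1 s) E).
  have hnu : hi nu = lo s by lra.
  have lv : lo v = lo s.
    have nn : (nu %% k != v %% k)%N by apply: neq_of_hi G _ _ _; apply/eqP; lra.
    have := H2 _ _ nn tb2; move: (H1 nu) (H1 v) => ? ?; case=> ?; lra.
  exists nv; split; [by rewrite tb1 | lra].
have E : t v = t s by move: ne tuv; case: (t v); case: (t u); case: (t s).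
have [lv _ _] := good_modeq G (strad_uniq G s3 s4 ls (H1 s) E).
have hnv : hi nv = lo s by lra.
have lu : lo u = lo s.
  have nn : (nv %% k != u %% k)%N by apply: neq_of_hi G _ _ _; apply/eqP; lra.
  have := H2 _ _ nn tb1; move: (H1 nv) (H1 u) => ? ?; case=> ?; lra.
exists nu; split; [by rewrite tb2 | lra].
Qed.

Lemma good_mirror R k lo hi t (G : @good R k lo hi t) :
  @good R k (fun m => - hi m) (fun m => - lo m) t.
Proof.
case: G => k3 P H1 H2 H34; split => //.
- by move=> m; have [a [b c]] := P m; rewrite a b c.
- by move=> m; move: (H1 m); lra.
- by move=> m m' nm tm; case: (H2 _ _ nm tm) => ?; [right|left]; lra.
- by move=> m; have [[a b] c] := H34 m; split => //; split; lra.
Qed.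

Lemma exists_min (R : realType) k (f : nat -> R) : (0 < k)%N -> (forall m, f m = f (m %% k)%N) ->
  exists a, forall m, f a <= f m.
Proof.
move=> k0 P.
suff [a Ha] : exists a, forall m, (m < k)%N -> f a <= f m.
  by exists a => m; rewrite (P m); apply: Ha; rewrite ltn_pmod.
case: k k0 {P} => // k _.
elim: k => [|N IH].
  by exists 0%N => m; rewrite ltnS leqn0 => /eqP ->; exact: lexx.
have [a Ha] := IH.
case: (leP (f a) (f N.+1)) => c.
  exists a => m; rewrite ltnS leq_eqVlt => /orP[/eqP -> //|]; exact: Ha.
exists N.+1 => m; rewrite ltnS leq_eqVlt => /orP[/eqP ->|/Ha]; lra.
Qed.

Lemma tile (R : realType) (I : finType) (LO HI : I -> R) (u : R) (S : {set I}) v :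
 u <= v ->
 (forall s, s \in S -> [/\ u <= LO s, LO s < HI s & HI s <= v]) ->
 (forall s s', s \in S -> s' \in S -> s != s' -> HI s <= LO s' \/ HI s' <= LO s) ->
 (forall s, s \in S -> u < LO s -> exists2 s', s' \in S & HI s' = LO s) ->
 (u < v -> exists2 s, s \in S & HI s = v) ->
 \sum_(s in S) (HI s - LO s) = v - u.
Proof.
move: {2}#|S| (erefl #|S|) => N.
elim: N S v => [|N IH] S v cS uv Hb Hd Hc Ht.
  have S0 : S = set0 by apply: cards0_eq.
  rewrite S0 big_set0.
  case: (ltgtP u v) uv => // [c _|-> _]; last by rewrite subrr.
  by have [s] := Ht c; rewrite S0 inE.
case: (ltgtP u v) uv => // [c _|e _].
  have [s sS hs] := Ht c.
  rewrite (bigD1 s) //=.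
  have cS' : #|S :\ s| = N by move: cS; rewrite (cardsD1 s) sS add1n => -[].
  have [b1 b2 b3] := Hb s sS.
  have IH' := IH (S :\ s) (LO s) cS' b1.
  rewrite (eq_bigl (fun i => i \in S :\ s)); last by move=> i; rewrite in_setD1 andbC.
  rewrite IH'; first lra.
  - move=> s'; rewrite in_setD1 => /andP[ns s'S]; have [c1 c2 c3] := Hb s' s'S.
    split => //; case: (Hd s' s s'S sS ns) => ?; lra.
  - move=> s1 s2; rewrite !in_setD1 => /andP[_ h1] /andP[_ h2]; exact: Hd.
  - move=> s'; rewrite in_setD1 => /andP[ns s'S] l.
    have [s'' s''S h''] := Hc s' s'S l.
    exists s'' => //; rewrite in_setD1 s''S andbT; apply/eqP => E; subst s''.
    have [c1 c2 c3] := Hb s' s'S.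
    move: (Hd s' s s'S sS ns) => hd; clear -hd c2 c3 hs h'' b2; case: hd => ?; lra.
  - move=> l; have [s'' s''S h''] := Hc s sS l.
    exists s'' => //; rewrite in_setD1 s''S andbT; apply/eqP => E; subst s''; clear -h'' b2; lra.
exfalso; have : (0 < #|S|)%N by rewrite cS.
case/card_gt0P => s sS; have [c1 c2 c3] := Hb s sS; clear -e c1 c2 c3; lra.
Qed.

Lemma toord R k lo hi t (G : @good R k lo hi t) (k0 : (0 < k)%N) m :
  exists i : 'I_k, [/\ lo i = lo m, hi i = hi m & t i = t m].
Proof.
exists (Ordinal (ltn_pmod m k0)); have [a b c] := good_modeq G (modn_mod m k); by split.
Qed.

Lemma ord_neq k (i j : 'I_k) : i != j -> (i %% k != j %% k)%N.
Proof. by rewrite !modn_small. Qed.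

Lemma comb_main R k lo hi t (G : @good R k lo hi t) : (5 <= k)%N ->
  exists (S1 S0 : {set 'I_k}) (p0 p1 q0 q1 : 'I_k),
   [/\ (forall i : 'I_k, i \in S1 -> t i), (forall i : 'I_k, i \in S0 -> ~~ t i),
       S1 != set0,
       \sum_(i in S1) (hi i - lo i) = \sum_(i in S0) (hi i - lo i) &
       uniq [:: p0; p1; q0; q1] /\
       (forall j, j \in [:: p0; p1; q0; q1] -> j \notin S1 /\ j \notin S0)].
Proof.
move=> k5; have k0 : (0 < k)%N by lia.
have G' := G; case: G' => _ P H1 H2 _.
have Gm := good_mirror G.
have [a1 Ha1] := @exists_min _ k hi k0 (fun m => (P m).2.1).
have [a2 Ha2'] := @exists_min _ k (fun m => - lo m) k0 (fun m => f_equal _ (P m).1).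
have Ha2 : forall m, lo m <= lo a2 by move=> m; move: (Ha2' m); lra.
have g12 : hi a1 < lo a2.
  have n02 : (0 %% k != 2 %% k)%N by apply: mod_neq; lia.
  have n04 : (0 %% k != 4 %% k)%N by apply: mod_neq; lia.
  have n24 : (2 %% k != 4 %% k)%N by apply: mod_neq; lia.
  have t2 := good_t2 G 0; have t4 := good_t2 G 2.
  have := H2 _ _ n02 (esym t2); have := H2 _ _ n04 (esym (etrans t4 t2));
  have := H2 _ _ n24 (esym t4).
  move: (H1 0%N) (H1 2%N) (H1 4%N) (Ha1 0%N) (Ha1 2%N) (Ha1 4%N) (Ha2 0%N) (Ha2 2%N) (Ha2 4%N).
  by move=> *; repeat match goal with H : _ \/ _ |- _ => case: H => ? end; lra.
have hz : hi a1 < hi a2 by move: (H1 a2); lra.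
have B1 := bottom G Ha1 (erefl _) hz.
have hz' : - lo a2 < - lo a1 by move: (H1 a1) (Ha1 a1); lra.
have B2 := bottom Gm Ha2' (erefl _) hz'.
have G1o := G1 G Ha1 (erefl _) hz.
have G1m := G1 Gm Ha2' (erefl _) hz'.
have Ch := chain G Ha1 (erefl _).
pose S (tau : bool) := [set i : 'I_k | (t i == tau) && (hi a1 <= lo i) && (hi i <= lo a2)].
have inS tau (i : 'I_k) : (i \in S tau) = [&& t i == tau, hi a1 <= lo i & hi i <= lo a2].
  by rewrite inE andbA.
have sumS tau : \sum_(i in S tau) (hi i - lo i) = lo a2 - hi a1.
  apply: tile; first lra.
  - by move=> s; rewrite inS => /and3P[_ ? ?]; split.
  - move=> s s'; rewrite !inS => /and3P[/eqP ts _ _] /and3P[/eqP ts' _ _] ns.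
    by apply: H2; [exact: ord_neq | rewrite ts ts'].
  - move=> s; rewrite inS => /and3P[/eqP ts l1 l2] l.
    have [s' [ts' hs']] := Ch s l.
    have [i [li hi' ti]] := toord G k0 s'.
    exists i => //; last by rewrite hi'.
    rewrite inS ti ts' ts eqxx /= li.
    have := G1o s'; rewrite hs' => /(_ l) -> /=; rewrite hi' hs'; move: (H1 s); lra.
  - move=> _; have [_ [m [tm hm]]] := B2 tau.
    have [i [li hi' ti]] := toord G k0 m.
    exists i; last by rewrite hi'; move: hm; lra.
    rewrite inS ti tm eqxx /= li.
    have hm' : hi m = lo a2 by lra.
    have := G1o m; rewrite hm' => /(_ g12) -> /=; rewrite hi' hm'.
    exact: lexx.
have [[p0 [tp0 hp0]] _] := B1 false.
have [[p1 [tp1 hp1]] [m1 [tm1 lm1]]] := B1 true.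
have [[q0 [tq0 lq0]] _] := B2 false.
have [[q1 [tq1 lq1]] _] := B2 true.
have [P0 [lP0 hP0 tP0]] := toord G k0 p0.
have [P1 [lP1 hP1 tP1]] := toord G k0 p1.
have [Q0 [lQ0 hQ0 tQ0]] := toord G k0 q0.
have [Q1 [lQ1 hQ1 tQ1]] := toord G k0 q1.
have [M1 [lM1 hM1 tM1]] := toord G k0 m1.
exists (S true), (S false), P0, P1, Q0, Q1; split.
- by move=> i; rewrite inS => /and3P[/eqP -> _ _].
- by move=> i; rewrite inS => /and3P[/eqP -> _ _].
- apply/set0Pn; exists M1; rewrite inS tM1 tm1 eqxx /= lM1 lm1 lexx /= hM1.
  by have := G1m m1; rewrite lm1 => /(_ ltac:(lra)); lra.
- by rewrite !sumS.
have neqh (i j : 'I_k) : hi i != hi j -> i != j by move=> h; apply: contraNneq h => ->.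
have neqt (i j : 'I_k) : t i != t j -> i != j by move=> h; apply: contraNneq h => ->.
have e01 : P0 != P1 by apply: neqt; rewrite tP0 tP1 tp0 tp1.
have e23 : Q0 != Q1 by apply: neqt; rewrite tQ0 tQ1 tq0 tq1.
have hhQ0 : lo a2 < hi Q0 by move: (H1 Q0); rewrite lQ0; lra.
have hhQ1 : lo a2 < hi Q1 by move: (H1 Q1); rewrite lQ1; lra.
have e02 : P0 != Q0 by apply: neqh; apply/eqP; rewrite hP0; lra.
have e03 : P0 != Q1 by apply: neqh; apply/eqP; rewrite hP0; lra.
have e12 : P1 != Q0 by apply: neqh; apply/eqP; rewrite hP1; lra.
have e13 : P1 != Q1 by apply: neqh; apply/eqP; rewrite hP1; lra.
split; first by rewrite /= !inE negb_or negb_or negb_or e01 e02 e03 e12 e13 e23.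
move=> j; rewrite !in_cons in_nil orbF => /or4P[] /eqP ->; rewrite !inS !negb_and.
- have h : ~~ (hi a1 <= lo P0) by rewrite -ltNge lP0; move: (H1 p0); rewrite hp0; lra.
  by rewrite h !orbT.
- have h : ~~ (hi a1 <= lo P1) by rewrite -ltNge lP1; move: (H1 p1); rewrite hp1; lra.
  by rewrite h !orbT.
- have h : ~~ (hi Q0 <= lo a2) by rewrite -ltNge.
  by rewrite h !orbT.
- have h : ~~ (hi Q1 <= lo a2) by rewrite -ltNge.
  by rewrite h !orbT.
Qed.

Lemma k3_false R lo hi t : ~ @good R 3 lo hi t.
Proof.
move=> G; have G' := G; case: G' => _ P _ _ H.
have e := (P 3%N).2.2; rewrite modnn in e.
move: (H 0%N).2 (H 1%N).2 (H 2%N).2; rewrite e.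
by case: (t 0%N); case: (t 1%N); case: (t 2%N).
Qed.

Lemma k4_case R lo hi t : @good R 4 lo hi t ->
  exists p, forall m, (m < 4)%N -> hi m = p \/ lo m = p.
Proof.
move=> G; have G' := G; case: G' => _ P H1 H2 H.
have e := (P 4%N).1; rewrite modnn in e.
have e' := (P 4%N).2.1; rewrite modnn in e'.
have t2 := good_t2 G 0; have t3 := good_t2 G 1.
have := H2 0%N 2%N isT (esym t2); have := H2 1%N 3%N isT (esym t3).
move: (H 0%N).1 (H 1%N).1 (H 2%N).1 (H 3%N).1; rewrite e e'.
move: (H1 0%N) (H1 1%N) (H1 2%N) (H1 3%N) => ? ? ? ? [? ?] [? ?] [? ?] [? ?].
case=> ?; case=> ?.
all: first [ by exists (hi 0%N); case=> [|[|[|[|m]]]] // _; first [left; lra | right; lra]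
           | by exists (lo 0%N); case=> [|[|[|[|m]]]] // _; first [left; lra | right; lra]].
Qed.

Lemma ex_q1 (R : realType) (xa xb ra rb : R) : 0 < ra -> 0 < rb ->
  (xa + ra = xb + rb \/ xa - ra = xb - rb) ->
  exists q, `|q - xa| < ra /\ `|q - xb| < rb.
Proof.
move=> ha hb h; case: (lerP ra rb) => c.
  by exists xa; rewrite !ltr_distl; case: h => ?; split; apply/andP; split; lra.
by exists xb; rewrite !ltr_distl; case: h => ?; split; apply/andP; split; lra.
Qed.

Lemma ex_q2 (R : realType) (ya yb ra rb : R) :
  ya - ra < yb + rb -> yb - rb < ya + ra -> 0 < ra -> 0 < rb ->
  exists q, `|q - ya| < ra /\ `|q - yb| < rb.
Proof.
move=> h1 h2 ha hb.
case: (lerP (ya - ra) (yb - rb)) => c1; case: (lerP (ya + ra) (yb + rb)) => c2.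
- by exists ((yb - rb + (ya + ra)) / 2); rewrite !ltr_distl; split; apply/andP; split; lra.
- by exists ((yb - rb + (yb + rb)) / 2); rewrite !ltr_distl; split; apply/andP; split; lra.
- by exists ((ya - ra + (ya + ra)) / 2); rewrite !ltr_distl; split; apply/andP; split; lra.
- by exists ((ya - ra + (yb + rb)) / 2); rewrite !ltr_distl; split; apply/andP; split; lra.
Qed.

Lemma abs_cases (R : realType) (z s : R) : `|z| = s -> z = s \/ z = - s.
Proof.
case: (lerP 0 z) => h; [rewrite ger0_norm // | rewrite ltr0_norm //] => <-; [left|right] => //.
by rewrite opprK.
Qed.

Unset Implicit Arguments.

Theorem lemma16 (R : realType) (n : nat) (r x y : 'I_n -> R)
    (k : nat) (c : 'I_k -> 'I_n) :
  (6 <= n)%N ->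
  homothetic_packing r x y ->
  weak_generic r ->
  Ex_cycle r x y c ->
  (forall i : 'I_k,
      ~ (x (c (ord_pred i)) < x (c i) < x (c (ordS i))) /\
      ~ (x (c (ordS i)) < x (c i) < x (c (ord_pred i)))) ->
  k = 4%N /\ exists q : R * R, forall i : 'I_k, is_corner r x y (c i) q.
Proof.
move=> n6 [rpos pack] wg [k3 [cinj edges]] nonmono.
have k0 : (0 < k)%N by lia.
pose ord m : 'I_k := Ordinal (ltn_pmod m k0).
have ordS_ord m : ordS (ord m) = ord m.+1.
  by apply: val_inj; rewrite /= -addn1 modnDml addn1.
have pred_ord m : ord_pred (ord m.+1) = ord m by rewrite -ordS_ord ordSK.
have ord_mod m : ord (m %% k)%N = ord m by apply: val_inj; rewrite /= modn_mod.
have ord_modS m : ord (m %% k).+1 = ord m.+1.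
  by apply: val_inj; rewrite /= -addn1 modnDml addn1.
have ord_val (i : 'I_k) : ord i = i by apply: val_inj; rewrite /= modn_small.
have edge m : Ex_edge r x y (c (ord m)) (c (ord m.+1)) by rewrite -ordS_ord; apply: edges.
have side m : x (c (ord m.+1)) = x (c (ord m)) + (r (c (ord m)) + r (c (ord m.+1))) \/
              x (c (ord m.+1)) = x (c (ord m)) - (r (c (ord m)) + r (c (ord m.+1))).
  have [_ [e _]] := edge m; case: (abs_cases (esym e)) => h; [right|left]; lra.
pose t m := x (c (ord m)) < x (c (ord m.+1)).
have tS m : t m.+1 = ~~ t m.
  have [nm1 nm2] := nonmono (ord m.+1); rewrite pred_ord ordS_ord in nm1 nm2.
  have s1 := side m; have s2 := side m.+1.
  have p1 := rpos (c (ord m)); have p2 := rpos (c (ord m.+1)); have p3 := rpos (c (ord m.+2)).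
  rewrite /t; case: s1 => e1; case: s2 => e2.
  - by exfalso; apply: nm1; apply/andP; split; lra.
  - have -> : (x (c (ord m)) < x (c (ord m.+1))) = true by apply/idP; lra.
    by apply/negbTE; rewrite -leNgt; lra.
  - have -> : (x (c (ord m)) < x (c (ord m.+1))) = false by apply/negbTE; rewrite -leNgt; lra.
    by rewrite [~~ false]/=; lra.
  - by exfalso; apply: nm2; apply/andP; split; lra.
pose ell m := if t m then x (c (ord m)) + r (c (ord m)) else x (c (ord m)) - r (c (ord m)).
have ellS m : ell m.+1 = ell m.
  rewrite /ell tS; case tm: (t m) => /=; move: tm; rewrite /t => tm.
    case: (side m) => e; first lra.
    by exfalso; move: tm; rewrite e; move: (rpos (c (ord m))) (rpos (c (ord m.+1))) => ? ? /idP; lra.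
  case: (side m) => e; last lra.
  by exfalso; move: tm; rewrite e; move: (rpos (c (ord m))) (rpos (c (ord m.+1))) => ? ? /negbT; rewrite -leNgt; lra.
have ell0 m : ell m = ell 0%N by elim: m => // m IH; rewrite ellS.
pose lo m := y (c (ord m)) - r (c (ord m)).
pose hi m := y (c (ord m)) + r (c (ord m)).
have G : good k lo hi t.
  split => //.
  - by move=> m; rewrite /lo /hi /t ord_mod ord_modS.
  - by move=> m; rewrite /lo /hi; move: (rpos (c (ord m))); lra.
  - move=> m m' nm tm.
    have ne : c (ord m) != c (ord m').
      apply/negP => /eqP /cinj /(f_equal val) /= E; by rewrite E eqxx in nm.
    case: (lerP (hi m) (lo m')) => h1; first by left.
    case: (lerP (hi m') (lo m)) => h2; first by right.
    exfalso; move: h1 h2; rewrite /hi /lo => h1 h2.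
    have [q2 [q2a q2b]] := ex_q2 h2 h1 (rpos _) (rpos _).
    have el : ell m = ell m' by rewrite (ell0 m) (ell0 m').
    have [q1 [q1a q1b]] : exists q, `|q - x (c (ord m))| < r (c (ord m)) /\ `|q - x (c (ord m'))| < r (c (ord m')).
      apply: ex_q1; try exact: rpos.
      by move: el; rewrite /ell tm; case: (t m'); [left|right].
    by apply: (pack _ _ ne (q1, q2)); split; split.
  - move=> m; split; last by rewrite tS; case: (t m).
    have [[_ [q [[_ qa] [_ qb]]]] _] := edge m.
    move: qa qb; rewrite !ler_distl /lo /hi => /andP[? ?] /andP[? ?]; split; lra.
case: (ltngtP k 4) => [lt4|gt4|e4].
- exfalso; have e3 : k = 3%N by lia.
  subst k; exact: k3_false G.
- exfalso; have k5 : (5 <= k)%N by lia.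
  have [S1 [S0 [P0 [P1 [Q0 [Q1 [hS1 hS0 ne sumeq [uq notin]]]]]]]] := comb_main G k5.
  have hl (i : 'I_k) : hi i - lo i = 2 * r (c i) by rewrite /hi /lo ord_val; lra.
  have sumeq' : \sum_(i in S1) r (c i) = \sum_(i in S0) r (c i).
    by move: sumeq; rewrite !(eq_bigr _ (fun i _ => hl i)) -!mulr_sumr => h; lra.
  pose A := c @: S1; pose B := c @: S0.
  pose sg := fun v : 'I_n => if v \in A then (1 : int) else if v \in B then (-1 : int) else (0 : int).
  have AB v : v \in A -> (v \in B) = false.
    move=> /imsetP[i iS ->]; rewrite /B mem_imset //; apply/negP => /hS0.
    by rewrite hS1.
  have sg0 := wg sg.
  have /set0Pn [i iS] := ne.
  have H0 : sg (c i) = 0.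
  apply: sg0.
  - by move=> v; rewrite /sg; case: ifP => _; [|case: ifP => _].
  - have sub : c @: [set j in [:: P0; P1; Q0; Q1]] \subset [set v | sg v == 0].
      apply/subsetP => v /imsetP[j jin ->]; rewrite inE in jin; have [n1 n0] := notin j jin.
      by rewrite inE /sg /A /B !mem_imset // (negbTE n1) (negbTE n0).
    by have := subset_leq_card sub; rewrite card_imset // cardsE (card_uniqP uq).
  - have pt v : (sg v)%:~R * r v = (if v \in A then r v else 0) - (if v \in B then r v else 0).
      rewrite /sg; case hA: (v \in A); first by rewrite (AB v hA) mul1r subr0.
      by case hB: (v \in B); [rewrite mulN1r sub0r | rewrite mul0r subr0].
    rewrite (eq_bigr _ (fun v _ => pt v)) sumrB -!big_mkcond /= !big_imset /=.
    + by rewrite sumeq' subrr.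
    + by move=> ? ? _ _ /cinj.
    + by move=> ? ? _ _ /cinj.
  by move: H0; rewrite /sg /A mem_imset // iS.
- split => //; subst k.
  have [p Hp] := k4_case G.
  exists (ell 0%N, p) => i; rewrite -(ord_val i); split.
  + by rewrite /= -(ell0 i) /ell; case: (t i); [left|right].
  + by have := Hp i (ltn_ord i); rewrite /hi /lo /= => -[<-|<-]; [left|right].
Qed.
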